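(* Let $n\equiv 3\pmod 4$ be a positive integer. Then $n$ is simultaneously a Carmichael number and a Gaussian Carmichael number if and only if $n$ is a $1$-Williams number and every prime $p$ dividing $n$ satisfies $p\equiv 3\pmod 4$.
   Context: A Carmichael number is a composite $n$ with $a^{n-1}\equiv 1\pmod n$ for all integers $a$ coprime to $n$ (equivalently, by Korselt's criterion, $n$ composite, square-free, and $p-1\mid n-1$ for every prime $p\mid n$). The function $\mathcal{F}$ is defined by $\mathcal{F}(n)=n-1$ if $n\equiv 1\pmod 4$, $\mathcal{F}(n)=n+1$ if $n\equiv 3 \pmod 4$, $\mathcal{F}(n)=n$ otherwise. A composite integer $n$ is a Gaussian Fermat pseudoprime to base $z\in\mathbb{Z}[i]$ if $\gcd(n,z\overline{z})=1$ and $(z/\overline{z})^{\mathcal{F}(n)}\equiv 1\pmod n$ in $\mathbb{Z}[i]/n\mathbb{Z}[i]$; a composite $n$ is a Gaussian Carmichael number if it is a Gaussian Fermat pseudoprime to every base $z\in\mathbb{Z}[i]$ with $\gcd(n,z\overline{z})=1$. A $1$-Williams number is a composite square-free integer $n$ such that for every prime $p\mid n$, $p+1\mid n+1$ and $p-1\mid n-1$. *)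

(* Defs.v *)
From HB Require Import structures.
From mathcomp Require Import all_boot all_order all_algebra.
Set Implicit Arguments. Unset Strict Implicit. Unset Printing Implicit Defensive.
Import Order.TTheory GRing.Theory Num.Theory.

Local Open Scope ring_scope.

Definition composite (n : nat) : bool := (1 < n)%N && ~~ prime n.

Definition squarefree (n : nat) : Prop :=
  forall p : nat, prime p -> ~~ (p * p %| n)%N.

Definition carmichael (n : nat) : Prop :=
  composite n /\
  forall a : int, coprimez a n%:Z -> (a ^+ n.-1 == 1 %[mod n%:Z])%Z.

(* Gaussian integers Z[i] represented as pairs (a, b) meaning a + b i. *)
Definition gauss := (int * int)%type.
Definition gmul (z w : gauss) : gauss :=
  (z.1 * w.1 - z.2 * w.2, z.1 * w.2 + z.2 * w.1).
Definition gone : gauss := (1, 0).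
Definition gconj (z : gauss) : gauss := (z.1, - z.2).
Definition gpow (z : gauss) (k : nat) : gauss := iter k (gmul z) gone.
Definition gnorm (z : gauss) : int := z.1 * z.1 + z.2 * z.2.
Definition gcong (n : nat) (u v : gauss) : bool :=
  (u.1 == v.1 %[mod n%:Z])%Z && (u.2 == v.2 %[mod n%:Z])%Z.

Definition calF (n : nat) : nat :=
  (if n %% 4 == 1 then n.-1 else if n %% 4 == 3 then n.+1 else n)%N.

(* (z / conj z)^F(n) = 1 in Z[i]/nZ[i]: conj z is a unit there (w its inverse),
   and z/conj z = z * w. *)
Definition gauss_fermat_psp (n : nat) (z : gauss) : Prop :=
  composite n /\ coprimez n%:Z (gnorm z) /\
  exists w : gauss, gcong n (gmul w (gconj z)) gone /\
                    gcong n (gpow (gmul z w) (calF n)) gone.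

Definition gauss_carmichael (n : nat) : Prop :=
  composite n /\
  forall z : gauss, coprimez n%:Z (gnorm z) -> gauss_fermat_psp n z.

Definition williams1 (n : nat) : Prop :=
  composite n /\ squarefree n /\
  forall p : nat, prime p -> (p %| n)%N ->
    (p.+1 %| n.+1)%N /\ (p.-1 %| n.-1)%N.

(* Main.v *)
Require Import Defs.
From HB Require Import structures.
From mathcomp Require Import all_boot all_order all_algebra.
From mathcomp Require Import all_fingroup all_solvable all_field.
From mathcomp Require Import zify ring lra.
Set Implicit Arguments. Unset Strict Implicit. Unset Printing Implicit Defensive.
Import Order.TTheory GRing.Theory Num.Theory.
Open Scope ring_scope.

Lemma natr_Fp p (x : 'F_p) : (x : nat)%:R = x.
Proof. exact: natr_Zp. Qed.

Lemma fermatF p (x : 'F_p) : prime p -> x != 0 -> x ^+ p.-1 = 1.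
Proof.
move=> pp nx.
have := expf_card x; rewrite card_Fp //.
case: p pp x nx => // q pp x nx; rewrite exprS /= => H.
by have := congr1 (fun y => x^-1 * y) H; rewrite mulrA mulVf // mul1r.
Qed.

Lemma fin_gen (F : finFieldType) :
  exists2 g : F, g != 0 & forall k, g ^+ k = 1 -> (#|F|.-1 %| k)%N.
Proof.
have /cyclicP [u Hu] := field_unit_group_cyclic [set: {unit F}]%G.
exists (val u); first by rewrite -unitfE (valP u).
move=> k Hk.
have : (u ^+ k)%g == 1%g.
  by apply/eqP/val_inj; rewrite FinRing.val_unitX Hk.
by rewrite -order_dvdn /order -Hu card_finField_unit.
Qed.

Lemma norm_neq0 p (a b : 'F_p) : prime p -> (p %% 4 = 3)%N ->
  (a != 0) || (b != 0) -> a * a + b * b != 0.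
Proof.
move=> pp p4; have [->|nb] := eqVneq b 0.
  by rewrite mulr0 addr0 orbF => na; rewrite mulf_neq0.
move=> _.
apply/negP => /eqP hN.
set t := a / b.
have tt : t * t = -1.
  have e : a * a = - (b * b) by apply/eqP; rewrite -addr_eq0 hN.
  rewrite /t; have -> : a / b * (a / b) = (a * a) / (b * b) by field.
  by rewrite e; field.
have t0 : t != 0.
  by apply/negP => /eqP t0; move: tt; rewrite t0 mulr0 => /eqP; rewrite eq_sym oppr_eq0 oner_eq0.
have := fermatF pp t0.
have -> : p.-1 = (2 * (2 * (p %/ 4)).+1)%N.
  have := divn_eq p 4; rewrite p4; lia.
rewrite exprM expr2 tt -signr_odd /= oddM /= expr1 => h.
have h2 : (2%:R : 'F_p) = 0 by rewrite -[2%:R]/(1 + 1) -{1}h; ring.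
have : (p %| 2)%N by rewrite (dvdn_pcharf (pchar_Fp pp)) h2.
rewrite dvdn_prime2 //; move/eqP => e; move: p4; rewrite e.
by [].
Qed.

(* Gaussian integers mod p, p = 3 mod 4 : the field F_{p^2} *)
Definition GF (p : nat) (H : prime p && (p %% 4 == 3)%N) : Type := ('F_p * 'F_p)%type.

HB.instance Definition _ p H := Finite.on (@GF p H).
HB.instance Definition _ p H := GRing.Zmodule.on (@GF p H).

Definition gfmul p H (x y : @GF p H) : @GF p H :=
  (x.1 * y.1 - x.2 * y.2, x.1 * y.2 + x.2 * y.1).
Definition gfone p H : @GF p H := (1, 0).

Lemma gfaddE p H (x y : @GF p H) : x + y = (x.1 + y.1, x.2 + y.2).
Proof. by []. Qed.
Lemma gfoppE p H (x : @GF p H) : - x = (- x.1, - x.2).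
Proof. by []. Qed.
Lemma gf0E p H : (0 : @GF p H) = (0, 0).
Proof. by []. Qed.

Lemma gfmulA p H : associative (@gfmul p H).
Proof. by move=> [a b] [c d] [e f]; rewrite /gfmul /=; congr pair; ring. Qed.
Lemma gfmulC p H : commutative (@gfmul p H).
Proof. by move=> [a b] [c d]; rewrite /gfmul /=; congr pair; ring. Qed.
Lemma gfmul1 p H : left_id (@gfone p H) (@gfmul p H).
Proof. by move=> [a b]; rewrite /gfmul /=; congr pair; ring. Qed.
Lemma gfmulD p H : left_distributive (@gfmul p H) +%R.
Proof. by move=> [a b] [c d] [e f]; rewrite /gfmul !gfaddE /=; congr pair; ring. Qed.
Lemma gfone0 p H : @gfone p H != 0.
Proof. by apply/negP => /eqP [] /eqP; rewrite oner_eq0. Qed.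

HB.instance Definition _ p H := GRing.Zmodule_isComNzRing.Build (@GF p H)
  (@gfmulA p H) (@gfmulC p H) (@gfmul1 p H) (@gfmulD p H) (@gfone0 p H).

Lemma gfmulE p H (x y : @GF p H) : x * y = (x.1 * y.1 - x.2 * y.2, x.1 * y.2 + x.2 * y.1).
Proof. by []. Qed.
Lemma gfoneE p H : (1 : @GF p H) = (1, 0).
Proof. by []. Qed.

Definition gfinv p H (x : @GF p H) : @GF p H :=
  (x.1 / (x.1 * x.1 + x.2 * x.2), - x.2 / (x.1 * x.1 + x.2 * x.2)).

Lemma gfmulV p H (x : @GF p H) : x != 0 -> gfinv x * x = 1.
Proof.
case/andP: (H) => pp /eqP p4.
case: x => a b nx.
have hN : a * a + b * b != 0.
  apply: norm_neq0 => //; apply: contraNT nx; rewrite negb_or !negbK.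
  by case/andP => /eqP -> /eqP ->.
rewrite /gfinv gfmulE gfoneE /=; congr pair; field => //.
Qed.

Lemma gfinv0 p H : @gfinv p H 0 = 0.
Proof. by rewrite /gfinv /= !mul0r oppr0 mul0r. Qed.

HB.instance Definition _ p H := GRing.ComNzRing_isField.Build (@GF p H)
  (@gfmulV p H) (@gfinv0 p H).
Section GFTh.
Variables (p : nat) (H : prime p && (p %% 4 == 3)%N).
Local Notation G := (@GF p H).

Lemma gf_pp : prime p. Proof. by case/andP: H. Qed.
Lemma gf_p4 : (p %% 4 = 3)%N. Proof. by case/andP: H => _ /eqP. Qed.

Lemma gfnatE k : (k%:R : G) = (k%:R, 0).
Proof.
elim: k => [|k IH]; first by [].
by rewrite -addn1 !natrD IH gfaddE /= addr0.
Qed.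

Lemma pchar_GF : p \in [pchar G].
Proof. by rewrite inE gf_pp /= gfnatE pchar_Fp_0 ?gf_pp. Qed.

Definition gemb (a : 'F_p) : G := (a, 0).
Definition jj : G := (0, 1).

Lemma gembX a k : gemb a ^+ k = gemb (a ^+ k).
Proof.
elim: k => [|k IH]; first by [].
by rewrite !exprS IH /gemb gfmulE /=; congr pair; ring.
Qed.

Lemma gdecomp (x : G) : x = gemb x.1 + jj * gemb x.2.
Proof. by case: x => a b; rewrite /gemb /jj gfmulE gfaddE /=; congr pair; ring. Qed.

Lemma jj2 : jj ^+ 2 = -1.
Proof. by rewrite expr2 /jj gfmulE gfoppE gfoneE /=; congr pair; ring. Qed.

Lemma jjp : jj ^+ p = - jj.
Proof.
have e : p = (4 * (p %/ 4) + 3)%N by have := divn_eq p 4; rewrite gf_p4; lia.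
rewrite [X in _ ^+ X]e exprD exprM.
have -> : jj ^+ 4 = 1 by rewrite -[4%N]/(2 * 2)%N exprM jj2 expr2 mulrNN mulr1.
by rewrite expr1n mul1r -[3%N]/(2 + 1)%N exprD jj2 expr1 mulN1r.
Qed.

Definition gconjF (x : G) : G := (x.1, - x.2).

Lemma Fp_card_exp (a : 'F_p) : a ^+ p = a.
Proof. by have := expf_card a; rewrite card_Fp // gf_pp. Qed.

Lemma frobG (x : G) : x ^+ p = gconjF x.
Proof.
have chp := pchar_GF.
rewrite {1}(gdecomp x).
rewrite -pFrobenius_autE pFrobenius_autD_comm; last exact: mulrC.
rewrite pFrobenius_autM_comm; last exact: mulrC.
rewrite !pFrobenius_autE jjp !gembX !Fp_card_exp.
by rewrite /gconjF /gemb /jj gfmulE gfaddE gfoppE /=; congr pair; ring.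
Qed.

Lemma gconjFK (x : G) : gconjF (gconjF x) = x.
Proof. by case: x => a b; rewrite /gconjF /= opprK. Qed.

Lemma card_GF : #|(G : finType)| = (p * p)%N.
Proof. by rewrite card_prod card_Fp // gf_pp. Qed.

End GFTh.
Lemma dvdz_Fp p (x : int) : prime p -> (p %| x)%Z = (x%:~R == 0 :> 'F_p).
Proof. by move=> pp; rewrite (dvdz_pcharf (pchar_Fp pp)). Qed.

Lemma glue n (x : int) : (0 < n)%N -> squarefree n ->
  (forall p, prime p -> (p %| n)%N -> (p %| x)%Z) -> (n %| x)%Z.
Proof.
move=> n0 sq hp; rewrite /dvdz /=.
apply/(dvdn_partP _ n0) => p; rewrite mem_primes => /and3P [pp _ pn].
rewrite p_part; apply: (@dvdn_trans p); last exact: (hp p pp pn).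
have : (logn p n <= 1)%N.
  rewrite leqNgt; apply/negP => h.
  have : (p ^ 2 %| n)%N by rewrite pfactor_dvdn.
  by rewrite -mulnn => h2; have := sq p pp; rewrite h2.
by case: (logn p n) => [|[|]] //= _; rewrite ?dvd1n ?expn1.
Qed.

Section Psi.
Variables (p : nat) (H : prime p && (p %% 4 == 3)%N).
Local Notation G := (@GF p H).

Definition psi (z : gauss) : G := (z.1%:~R, z.2%:~R).

Lemma psi_mul z w : psi (gmul z w) = psi z * psi w.
Proof. by rewrite /psi gfmulE /=; congr pair; rewrite ?rmorphB ?rmorphD ?rmorphM. Qed.

Lemma psi_one : psi gone = 1.
Proof. by rewrite /psi gfoneE /=. Qed.

Lemma psi_pow z k : psi (gpow z k) = psi z ^+ k.
Proof.
elim: k => [|k IH]; first exact: psi_one.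
by rewrite /gpow iterS -/(gpow z k) psi_mul IH exprS.
Qed.

Lemma psi_conj z : psi (gconj z) = gconjF (psi z).
Proof. by rewrite /psi /gconjF /= rmorphN. Qed.

Lemma psi_gcong n u v : (p %| n)%N -> gcong n u v -> psi u = psi v.
Proof.
have pp := gf_pp H.
move=> pn /andP [h1 h2]; rewrite /psi.
have hh : forall a b : int, (a == b %[mod n%:Z])%Z -> (a%:~R : 'F_p) = b%:~R.
  move=> a b; rewrite eqz_mod_dvd => hd.
  have : (p %| a - b)%Z by apply: dvdz_trans hd.
  by rewrite dvdz_Fp // rmorphB subr_eq0 => /eqP.
by rewrite (hh _ _ h1) (hh _ _ h2).
Qed.

End Psi.

Lemma gcong_glue n u v : (0 < n)%N -> squarefree n ->
  (forall p, prime p -> (p %| n)%N -> (p %% 4 = 3)%N) ->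
  (forall p (H : prime p && (p %% 4 == 3)%N), (p %| n)%N -> @psi p H u = @psi p H v) ->
  gcong n u v.
Proof.
move=> n0 sq h3 hp; apply/andP; split; rewrite eqz_mod_dvd; apply: glue => // p pp pn;
  have H : prime p && (p %% 4 == 3)%N by rewrite pp h3.
- by have [] := hp p H pn => e1 _; rewrite dvdz_Fp // rmorphB /= e1 subrr.
- by have [] := hp p H pn => _ e1; rewrite dvdz_Fp // rmorphB /= e1 subrr.
Qed.

Lemma calFE n : (n %% 4 = 3)%N -> calF n = n.+1.
Proof. by rewrite /calF => ->. Qed.

Lemma carm_back n : (0 < n)%N -> williams1 n -> carmichael n.
Proof.
move=> n0 [comp [sq hw]]; split => // a ca.
rewrite eqz_mod_dvd; apply: glue => // p pp pn.
rewrite dvdz_Fp // rmorphB rmorph1 rmorphXn subr_eq0.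
have [_ /dvdnP [k ->]] := hw p pp pn.
have a0 : (a%:~R : 'F_p) != 0.
  rewrite -dvdz_Fp //; apply/negP => pa.
  have : (p %| gcdz a n)%Z by rewrite dvdz_gcd pa /=.
  by move: ca; rewrite /coprimez => /eqP ->; rewrite dvdzE /= dvdn1 => /eqP p1; move: pp; rewrite p1.
by rewrite mulnC exprM fermatF // expr1n.
Qed.

Lemma gauss_back n : (0 < n)%N -> (n %% 4 = 3)%N -> williams1 n ->
  (forall p, prime p -> (p %| n)%N -> (p %% 4 = 3)%N) -> gauss_carmichael n.
Proof.
move=> n0 n4 [comp [sq hw]] h3; split => // z cz; split => //; split => //.
have [[u c] /= huc] := coprimezP _ _ cz.
pose w : gauss := (c * z.1, c * z.2).
have hw1 : gcong n (gmul w (gconj z)) gone.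
  apply/andP; split; rewrite /gmul /w /gone /=.
    rewrite eqz_mod_dvd.
    have -> : c * z.1 * z.1 - c * z.2 * - z.2 - 1 = (- u) * n%:Z.
      have e : c * Defs.gnorm z = 1 - u * n%:Z by rewrite -[1 in RHS]huc; ring.
      have -> : c * z.1 * z.1 - c * z.2 * - z.2 = c * Defs.gnorm z by rewrite /Defs.gnorm; ring.
      by rewrite e; ring.
    by apply: dvdz_mull; rewrite dvdzz.
  by have -> : c * z.1 * - z.2 + c * z.2 * z.1 = 0 by ring.
exists w; split => //.
rewrite calFE //; apply: gcong_glue => // p H pn.
have h1 := psi_gcong H pn hw1.
rewrite psi_mul psi_conj psi_one in h1.
rewrite psi_pow psi_one psi_mul.
have pp := gf_pp H.
have [/dvdnP [k ->] _] := hw p pp pn.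
rewrite mulnC exprM.
suff -> : (psi H z * psi H w) ^+ p.+1 = 1 by rewrite expr1n.
move: h1; set Z := psi H z; set W := psi H w => h1.
have h2 : (W * gconjF Z) ^+ p.+1 = 1 by rewrite h1 expr1n.
rewrite exprMn exprSr frobG //.
rewrite exprMn [gconjF Z ^+ _]exprSr frobG // gconjFK in h2.
rewrite -h2; ring.
Qed.
Lemma carm_dvd n (a : int) : carmichael n -> coprimez a n%:Z -> (n %| a ^+ n.-1 - 1)%Z.
Proof. by move=> [_ h] ca; rewrite -eqz_mod_dvd; apply: h. Qed.

Lemma binom_mod (n m : nat) j : (n %| (m * m)%N)%N ->
  (n %| (1 + m%:Z) ^+ j - (1 + (j * m)%N%:Z))%Z.
Proof.
move=> hm; elim: j => [|j IH]; first by rewrite expr0 mul0n addr0 subrr dvdz0.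
have -> : (1 + m%:Z) ^+ j.+1 - (1 + (j.+1 * m)%N%:Z) =
  ((1 + m%:Z) ^+ j - (1 + (j * m)%N%:Z)) * (1 + m%:Z) + (j%:Z * (m * m)%N%:Z).
  by rewrite exprSr -[j.+1]addn1 !PoszM PoszD; ring.
rewrite rpredD //; first exact: dvdz_mulr.
by apply: dvdz_mull; rewrite dvdzE /=.
Qed.

Lemma sqfree_of_carm n : (0 < n)%N -> carmichael n -> squarefree n.
Proof.
move=> n0 hc p pp; apply/negP => /dvdnP [k hk].
pose m := (p * k)%N.
have m0 : (0 < m)%N by rewrite /m muln_gt0 prime_gt0 //=; move: n0; rewrite hk muln_gt0 => /andP [].
have hnm : n = (p * m)%N by rewrite hk /m; ring.
have hmm : (n %| m * m)%N by rewrite hk /m; apply/dvdnP; exists k; ring.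
have ca : coprimez (1 + m%:Z) n%:Z.
  apply/coprimezP; exists (1 - m%:Z, k%:Z) => /=.
  by rewrite /m hk !PoszM; ring.
have h1 := carm_dvd hc ca.
have h2 := binom_mod n.-1 hmm.
have : (n %| (n.-1 * m)%N%:Z)%Z.
  have -> : (n.-1 * m)%N%:Z = ((1 + m%:Z) ^+ n.-1 - 1) - ((1 + m%:Z) ^+ n.-1 - (1 + (n.-1 * m)%N%:Z)) by ring.
  by rewrite rpredB.
rewrite dvdzE /= {1}hnm dvdn_pmul2r // => hp.
have : (p %| n - n.-1)%N by rewrite dvdn_sub // hnm dvdn_mulr.
have -> : (n - n.-1 = 1)%N by lia.
by rewrite dvdn1 => /eqP p1; move: pp; rewrite p1.
Qed.
Lemma lift_Fp p q (x : 'F_p) r : prime p -> coprime p q ->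
  ((chinese p q x r)%:R : 'F_p) = x.
Proof.
by move=> pp cpq; rewrite -Fp_nat_mod // (chinese_modl cpq) Fp_nat_mod // natr_Fp.
Qed.

Lemma split_n n p : squarefree n -> prime p -> (p %| n)%N ->
  n = (n %/ p * p)%N /\ coprime p (n %/ p).
Proof.
move=> sq pp pn; split; first by rewrite divnK.
rewrite prime_coprime //; apply/negP => pq.
have := sq p pp; rewrite -{1}(divnK pn) mulnC dvdn_pmul2l ?prime_gt0 //.
by rewrite pq.
Qed.

Lemma pm1_of_carm n p : (0 < n)%N -> carmichael n -> squarefree n -> prime p ->
  (p %| n)%N -> (p.-1 %| n.-1)%N.
Proof.
move=> n0 hc sq pp pn.
have [hnq cpq] := split_n sq pp pn.
set q := (n %/ p)%N in hnq cpq.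
have [g g0 hg] := fin_gen ('F_p : finFieldType).
rewrite card_Fp // in hg.
apply: hg.
set a := chinese p q g 1.
have ca : coprimez a%:Z n%:Z.
  rewrite coprimezE /= hnq coprimeMr; apply/andP; split.
    by rewrite -coprime_modl (chinese_modr cpq) coprime_modl coprime1n.
  by rewrite coprime_sym -unitFpE // lift_Fp // unitfE.
have h := carm_dvd hc ca.
have : (p %| a%:Z ^+ n.-1 - 1)%Z.
  by apply: dvdz_trans h; rewrite dvdzE /= hnq dvdn_mull.
rewrite dvdz_Fp // rmorphB rmorphXn rmorph1 subr_eq0 => /eqP.
have ea : ((a : int)%:~R : 'F_p) = g by rewrite -[RHS](lift_Fp g 1 pp cpq).
by move=> e; rewrite -ea; exact: e.
Qed.

Close Scope ring_scope.
Lemma p3_of n p : (n %% 4 = 3)%N -> prime p -> (p %| n)%N -> (p.-1 %| n.-1)%N ->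
  (p %% 4 = 3)%N.
Proof.
move=> n4 pp pn hd.
have p2 : p != 2%N.
  by apply/eqP => e; move: pn; rewrite e => /dvdnP [k hk]; lia.
have podd : ~~ (2 %| p)%N.
  by rewrite (dvdn_prime2 (isT : prime 2) pp) eq_sym.
have p1 : (p %% 4 != 1)%N.
  apply/negP => /eqP e.
  have h4 : (4 %| p.-1)%N.
    by apply/dvdnP; exists (p %/ 4)%N; have := divn_eq p 4; lia.
  by have /dvdnP [k hk] := dvdn_trans h4 hd; lia.
have : (p %% 4 < 4)%N by rewrite ltn_mod.
move: podd p1; case: (p %% 4) (divn_eq p 4) => [|[|[|[|]]]] //= e.
- by move=> /negP []; apply/dvdnP; exists (2 * (p %/ 4)%N)%N; lia.
- by move=> /negP []; apply/dvdnP; exists (2 * (p %/ 4)%N + 1)%N; lia.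
Qed.

Open Scope ring_scope.
Lemma sqm1 (p : nat) : (0 < p)%N -> ((p * p).-1 = p.-1 * p.+1)%N.
Proof. case: p => // k _. rewrite mulSn mulnS /=. lia. Qed.

Lemma pp1_of n p (H : prime p && (p %% 4 == 3)%N) : (0 < n)%N -> (n %% 4 = 3)%N ->
  gauss_carmichael n -> squarefree n -> (p %| n)%N -> (p.+1 %| n.+1)%N.
Proof.
move=> n0 n4 hg sq pn.
have pp := gf_pp H.
have [hnq cpq] := split_n sq pp pn.
set q := (n %/ p)%N in hnq cpq.
have [G G0 hG] := fin_gen (@GF p H : finFieldType).
rewrite card_GF in hG.
set z1 := chinese p q G.1 1; set z2 := chinese p q G.2 0.
pose z : gauss := (z1%:Z, z2%:Z).
have pz : psi H z = G.
  rewrite /psi /=.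
  have e1 : ((z1 : int)%:~R : 'F_p) = G.1 by rewrite -[RHS](lift_Fp G.1 1 pp cpq).
  have e2 : ((z2 : int)%:~R : 'F_p) = G.2 by rewrite -[RHS](lift_Fp G.2 0 pp cpq).
  by rewrite e1 e2; case: G {G0 hG z1 z2 z e1 e2}.
have cz : coprimez n%:Z (Defs.gnorm z).
  have -> : Defs.gnorm z = (z1 * z1 + z2 * z2)%N%:Z by rewrite /Defs.gnorm /= PoszD !PoszM.
  rewrite coprimezE /= hnq coprimeMl; apply/andP; split.
    have m1 : (z1 %% q = 1 %% q)%N := chinese_modr cpq _ _.
    have m2 : (z2 %% q = 0)%N by rewrite /z2 (chinese_modr cpq) mod0n.
    have : ((z1 * z1 + z2 * z2) %% q = 1 %% q)%N.
      rewrite -modnDm -modnMm m1 -[((z2 * z2) %% q)%N]modnMm m2 muln0 mod0n addn0.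
      by rewrite modnMm muln1 modn_mod.
    by move=> hN; rewrite -coprime_modr hN coprime_modr coprimen1.
  rewrite -unitFpE // unitfE natrD !natrM !lift_Fp //.
  apply: norm_neq0 => //; first exact: gf_p4.
  by move: G0; case: (G) => a b /=; apply: contraNT; rewrite negb_or !negbK => /andP [/eqP -> /eqP ->].
have [_ [_ [w [hw1 hw2]]]] := hg.2 z cz.
have h1 := psi_gcong H pn hw1.
rewrite psi_mul psi_conj psi_one pz -frobG // in h1.
have h2 := psi_gcong H pn hw2.
rewrite calFE // psi_pow psi_one psi_mul pz in h2.
set W := psi H w in h1 h2.
have e : G ^+ n.+1 = (G ^+ p) ^+ n.+1.
  have : (G ^+ p * (G * W)) ^+ n.+1 = (G ^+ p) ^+ n.+1 by rewrite exprMn h2 mulr1.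
  by rewrite mulrCA [G ^+ p * W]mulrC h1 mulr1.
have ep : G ^+ p = G ^+ p.-1 * G by rewrite -exprSr prednK // prime_gt0.
rewrite ep exprMn in e.
have e3 : (G ^+ p.-1) ^+ n.+1 = 1.
  apply: (mulIf (expf_neq0 n.+1 G0)); by rewrite mul1r -e.
rewrite -exprM in e3.
have := hG _ e3.
rewrite sqm1 ?prime_gt0 //.
rewrite dvdn_pmul2l //.
by have := prime_gt1 pp; case: (p) => [|[|]].
Qed.

Close Scope ring_scope.

Theorem mainTheorem16 (n : nat) (hn : (0 < n)%N) (h4 : n %% 4 = 3) :
  (carmichael n /\ gauss_carmichael n) <->
  (williams1 n /\ forall p : nat, prime p -> (p %| n)%N -> p %% 4 = 3).
Proof.
split.
  move=> [hc hg].
  have sq := sqfree_of_carm hn hc.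
  have h3 : forall p, prime p -> (p %| n)%N -> (p %% 4 = 3)%N.
    by move=> p pp pn; apply: (p3_of h4 pp pn); apply: pm1_of_carm.
  split => //; split; first by case: hc.
  split => // p pp pn; split; last exact: pm1_of_carm.
  have H : prime p && (p %% 4 == 3)%N by rewrite pp (h3 p pp pn).
  exact: (pp1_of H hn h4 hg sq pn).
move=> [hw h3]; split; first exact: carm_back.
exact: gauss_back.
Qed.
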